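(* Let $p\ge 2$, and let $v,s\in\mathbb{R}^n$ satisfy $v^Ts\ne 0$. Then the linear map $\phi:\mathbb{R}^{\otimes^{p-1} n}_{\mathrm{sym}}\to\mathbb{R}^{\otimes^{p-1} n}_{\mathrm{sym}}$, $\phi(\mathcal{A}) = P_{\mathrm{sym}}(\mathcal{A}\otimes v)[s]$, is bijective. Consequently, for fixed such $v$, the set $\{P_{\mathrm{sym}}(\mathcal{A}\otimes v):\mathcal{A}\in\mathbb{R}^{\otimes^{p-1} n}_{\mathrm{sym}}\}$ has the same dimension as $\mathbb{R}^{\otimes^{p-1} n}_{\mathrm{sym}}$.
   Context: A $p$-tensor $\mathcal{T} \in \mathbb{R}^{\otimes^p n}$ is a multilinear map $(\mathbb{R}^n)^p \to \mathbb{R}$; $\mathcal{T}[s]$ denotes the $(p-1)$-tensor obtained by fixing the first argument to $s$. The outer product is $(\mathcal{T}_1\otimes\mathcal{T}_2)[s_1,\dots,s_{p_1+p_2}] = \mathcal{T}_1[s_1,\dots,s_{p_1}]\,\mathcal{T}_2[s_{p_1+1},\dots,s_{p_1+p_2}]$, with a vector $v$ regarded as the 1-tensor $s\mapsto v^Ts$. For $\sigma\in S_p$, $\sigma(\mathcal{T})[s_1,\dots,s_p]=\mathcal{T}[s_{\sigma(1)},\dots,s_{\sigma(p)}]$; $\mathcal{T}$ is symmetric if $\sigma(\mathcal{T})=\mathcal{T}$ for all $\sigma$, $\mathbb{R}^{\otimes^p n}_{\mathrm{sym}}$ denotes the symmetric $p$-tensors, and $P_{\mathrm{sym}}(\mathcal{T})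 = \frac{1}{p!}\sum_{\sigma\in S_p}\sigma(\mathcal{T})$. *)

(* Defs.v *)
From HB Require Import structures.
From mathcomp Require Import all_boot all_order perm all_algebra.
From mathcomp Require Import reals.
Set Implicit Arguments. Unset Strict Implicit. Unset Printing Implicit Defensive.
Import Order.TTheory GRing.Theory Num.Theory.
Local Open Scope ring_scope.

(* A p-tensor on R^n, i.e. a multilinear map (R^n)^p -> R, is represented by its
   coefficient array: T[s_1,...,s_p] = \sum_j T j * \prod_k s_k (j k). *)
Definition tensor (R : realType) (n p : nat) := {ffun {ffun 'I_p -> 'I_n} -> R^o}.

Definition teval (R : realType) n p (T : tensor R n p) (s : 'I_p -> 'I_n -> R) : R :=
  \sum_(j : {ffun 'I_p -> 'I_n}) T j * \prod_(k < p) s k (j k).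

(* T[s]: the (p)-tensor obtained by fixing the first argument of the (p+1)-tensor T to s *)
Definition tcons n q (i : 'I_n) (j : {ffun 'I_q -> 'I_n}) : {ffun 'I_q.+1 -> 'I_n} :=
  [ffun k : 'I_q.+1 => if unlift ord0 k is Some k' then j k' else i].
Definition contract (R : realType) n q (T : tensor R n q.+1) (s : 'I_n -> R)
  : tensor R n q :=
  [ffun j => \sum_(i < n) s i * T (tcons i j)].

(* outer product T (x) v of a q-tensor with a vector v (the 1-tensor s |-> v^T s) *)
Definition tsnoc n q (j : {ffun 'I_q.+1 -> 'I_n}) : {ffun 'I_q -> 'I_n} :=
  [ffun k : 'I_q => j (widen_ord (leqnSn q) k)].
Definition outer_vec (R : realType) n q (T : tensor R n q) (v : 'I_n -> R)
  : tensor R n q.+1 :=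
  [ffun j => T (tsnoc j) * v (j ord_max)].

(* sigma(T)[s_1..s_p] = T[s_sigma(1)..s_sigma(p)], in coordinates *)
Definition tperm (R : realType) n p (sigma : 'S_p) (T : tensor R n p) : tensor R n p :=
  [ffun j : {ffun 'I_p -> 'I_n} => T [ffun k => j (sigma k)]].

Definition sym_tensor (R : realType) n p (T : tensor R n p) : Prop :=
  forall sigma : 'S_p, tperm sigma T = T.

Definition symspace (R : realType) n p : {vspace tensor R n p} :=
  (\bigcap_(sigma : 'S_p) lker (linfun (fun T : tensor R n p => tperm sigma T - T)))%VS.

Definition Psym (R : realType) n p (T : tensor R n p) : tensor R n p :=
  (p`!%:R)^-1 *: \sum_(sigma : 'S_p) tperm sigma T.

Definition dotv (R : realType) n (v s : 'I_n -> R) : R := \sum_(i < n) v i * s i.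

(* Main.v *)
Require Import Defs.
From HB Require Import structures.
From mathcomp Require Import all_boot all_order perm all_algebra.
From mathcomp Require Import reals.
From mathcomp Require Import ring.
Set Implicit Arguments. Unset Strict Implicit. Unset Printing Implicit Defensive.
Import Order.TTheory GRing.Theory Num.Theory.
Local Open Scope ring_scope.

Lemma lfunE_lin (K : fieldType) (U V : vectType K) (f : U -> V)
  (H : forall a x y, f (a *: x + y) = a *: f x + f y) : linfun f =1 f.
Proof.
move=> x.
pose g : {linear U -> V} := HB.pack f (GRing.isLinear.Build K U V _ f H).
exact: (lfunE g x).
Qed.

Section Aux.
Variables (R : realType) (n : nat) (v s : 'I_n -> R).

Definition del q (j : {ffun 'I_q.+1 -> 'I_n}) (k : 'I_q.+1) : {ffun 'I_q -> 'I_n} :=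
  [ffun l => j (lift k l)].

Definition Mop q (B : tensor R n q) : tensor R n q.+1 :=
  [ffun j : {ffun 'I_q.+1 -> 'I_n} => \sum_(k < q.+1) v (j k) * B (del j k)].

Definition Dop q (T : tensor R n q.+1) : tensor R n q := contract T s.

Lemma scaleRE (a b : R^o) : a *: b = a * b. Proof. by []. Qed.

Lemma del_tcons0 q m (i : {ffun 'I_q -> 'I_n}) : del (tcons m i) ord0 = i.
Proof. by apply/ffunP => l; rewrite !ffunE liftK. Qed.

Lemma tcons0 q m (i : {ffun 'I_q -> 'I_n}) : tcons m i ord0 = m.
Proof. by rewrite ffunE unlift_none. Qed.

Lemma tconsS q m (i : {ffun 'I_q -> 'I_n}) k : tcons m i (lift ord0 k) = i k.
Proof. by rewrite ffunE liftK. Qed.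

Lemma del_tconsS q m (i : {ffun 'I_q.+1 -> 'I_n}) k :
  del (tcons m i) (lift ord0 k) = tcons m (del i k).
Proof.
apply/ffunP => l; rewrite !ffunE.
case: (unliftP ord0 l) => [l'|] ->.
  have -> : lift (lift ord0 k) (lift ord0 l') = lift ord0 (lift k l').
    by apply: val_inj; rewrite /= /bump !leq0n /= !add1n ltnS; case: (k <= l')%N.
  by rewrite liftK ffunE.
have -> : lift (lift ord0 k) ord0 = ord0 :> 'I_q.+2 by apply: val_inj.
by rewrite unlift_none.
Qed.

Lemma DM0 (B : tensor R n 0) : Dop (Mop B) = dotv v s *: B.
Proof.
apply/ffunP => i; rewrite /Dop /contract !ffunE /dotv scaleRE mulr_suml.
apply: eq_bigr => m _; rewrite ffunE big_ord_recl big_ord0 addr0 tcons0.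
have -> : del (tcons m i) ord0 = i by apply: del_tcons0.
by rewrite mulrA [s m * _]mulrC.
Qed.

Lemma DMS q (B : tensor R n q.+1) : Dop (Mop B) = dotv v s *: B + Mop (Dop B).
Proof.
apply/ffunP => i; rewrite /Dop /contract !ffunE /dotv scaleRE mulr_suml.
rewrite (eq_bigr (fun m => s m * (v m * B i) + \sum_(k < q.+1) v (i k) * (s m * B (tcons m (del i k))))); last first.
  move=> m _; rewrite ffunE big_ord_recl tcons0 del_tcons0 mulrDr; congr (_ + _).
  rewrite mulr_sumr; apply: eq_bigr => k _.
  by rewrite tconsS del_tconsS mulrCA.
rewrite big_split /=; congr (_ + _).
  by apply: eq_bigr => m _; rewrite mulrA [s m * _]mulrC.
rewrite exchange_big /=; apply: eq_bigr => k _.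
by rewrite -mulr_sumr /contract ffunE.
Qed.

Lemma Dop_lin q a (X Y : tensor R n q.+1) : Dop (a *: X + Y) = a *: Dop X + Dop Y.
Proof.
apply/ffunP => i; rewrite /Dop /contract !ffunE scaleRE mulr_sumr -big_split /=.
by apply: eq_bigr => m _; rewrite !ffunE scaleRE mulrDr mulrCA.
Qed.

Lemma Mop0 q : Mop (0 : tensor R n q) = 0.
Proof. by apply/ffunP => j; rewrite !ffunE big1 // => k _; rewrite ffunE mulr0. Qed.

Hypothesis c0 : dotv v s != 0.

Lemma DM_inj d : forall (B : tensor R n d.+1) (k : nat),
  (dotv v s *+ k.+1) *: B + Mop (Dop B) = 0 -> B = 0.
Proof.
elim: d => [|d IH] B k H.
  have HD : Dop B = 0.
    have := congr1 (@Dop 0) H; rewrite Dop_lin DM0 -scalerDl.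
    have -> : Dop (0 : tensor R n 1) = 0 by apply/ffunP => i; rewrite !ffunE big1 // => m _; rewrite ffunE mulr0.
    move/eqP; rewrite scaler_eq0 => /orP [|/eqP //].
    by rewrite -mulrSr mulrn_eq0 /= (negbTE c0).
  move: H; rewrite HD Mop0 addr0 => /eqP; rewrite scaler_eq0 => /orP [|/eqP //].
  by rewrite mulrn_eq0 /= (negbTE c0).
have HD : Dop B = 0.
  apply: (IH _ k.+1).
  have := congr1 (@Dop d.+1) H; rewrite Dop_lin DMS addrA -scalerDl -mulrSr.
  have -> : Dop (0 : tensor R n d.+2) = 0 by apply/ffunP => i; rewrite !ffunE big1 // => m _; rewrite ffunE mulr0.
  by [].
move: H; rewrite HD Mop0 addr0 => /eqP; rewrite scaler_eq0 => /orP [|/eqP //].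
by rewrite mulrn_eq0 /= (negbTE c0).
Qed.


Lemma tpermM m (sg tau : 'S_m) (T : tensor R n m) :
  Defs.tperm tau (Defs.tperm sg T) = Defs.tperm (sg * tau) T.
Proof. by apply/ffunP => j; rewrite !ffunE; congr (T _); apply/ffunP => k; rewrite !ffunE permM. Qed.

Lemma Psym_sym m (T : tensor R n m) : sym_tensor (Psym T).
Proof.
move=> tau; apply/ffunP => j; rewrite /Psym !ffunE !scaleRE !sum_ffunE; congr (_ * _).
rewrite [RHS](reindex_inj (mulIg tau)) /=; apply: eq_bigr => sg _.
by rewrite -tpermM [in RHS]ffunE.
Qed.

Lemma contract_sym m (T : tensor R n m.+1) (x : 'I_n -> R) :
  sym_tensor T -> sym_tensor (contract T x).
Proof.
move=> HT tau; apply/ffunP => j; rewrite !ffunE; apply: eq_bigr => i _.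
congr (_ * _).
rewrite -{2}(HT (lift_perm ord0 ord0 tau)) ffunE; congr (T _).
apply/ffunP => k; rewrite !ffunE.
case: (unliftP ord0 k) => [k'|] ->.
  by rewrite lift_perm_lift !liftK ffunE.
by rewrite lift_perm_id unlift_none.
Qed.

Lemma sum_perm_pt m (G : 'I_m -> R) x y :
  \sum_(sg : 'S_m) G (sg x) = \sum_(sg : 'S_m) G (sg y).
Proof.
rewrite (reindex_inj (mulgI (perm.tperm x y))); apply: eq_bigr => sg _.
by rewrite permM tpermL.
Qed.

Lemma sum_perm_all m (G : 'I_m.+1 -> R) :
  m.+1%:R * \sum_(sg : 'S_m.+1) G (sg ord_max) = m.+1`!%:R * \sum_k G k.
Proof.
have -> : m.+1%:R * \sum_(sg : 'S_m.+1) G (sg ord_max) =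
          \sum_(x : 'I_m.+1) \sum_(sg : 'S_m.+1) G (sg x).
  rewrite [RHS](eq_bigr (fun _ => \sum_(sg : 'S_m.+1) G (sg ord_max))); last first.
    by move=> x _; symmetry; apply: sum_perm_pt.
  by rewrite sumr_const card_ord mulr_natl.
rewrite exchange_big /=.
rewrite (eq_bigr (fun _ => \sum_k G k)); last first.
  by move=> sg _; rewrite [RHS](reindex_inj (@perm_inj _ sg)).
by rewrite sumr_const card_Sn mulr_natl.
Qed.

Lemma sym_del m (A : tensor R n m) (sg : 'S_m.+1) (j : {ffun 'I_m.+1 -> 'I_n}) :
  sym_tensor A -> A (tsnoc [ffun k => j (sg k)]) = A (del j (sg ord_max)).
Proof.
move=> HA.
pose f (l : 'I_m) := odflt l (unlift (sg ord_max) (sg (widen_ord (leqnSn m) l))).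
have Hf l : lift (sg ord_max) (f l) = sg (widen_ord (leqnSn m) l).
  rewrite /f; case: (unliftP (sg ord_max) (sg (widen_ord (leqnSn m) l))) => [x ->|] //.
  move/perm_inj => /(congr1 val) /= Hl.
  by move: (ltn_ord l); rewrite Hl ltnn.
have finj : injective f.
  move=> l1 l2 E; have := Hf l2; rewrite -E Hf => /perm_inj /(congr1 val) /= H.
  exact: val_inj.
rewrite -[A in RHS](HA (perm finj)) ffunE; congr (A _).
by apply/ffunP => l; rewrite !ffunE permE Hf.
Qed.

Lemma Psym_outer m (A : tensor R n m) :
  sym_tensor A -> Psym (outer_vec A v) = (m.+1%:R)^-1 *: Mop A.
Proof.
move=> HA; apply/ffunP => j; rewrite /Psym !ffunE !scaleRE sum_ffunE.
pose G (k : 'I_m.+1) := v (j k) * A (del j k).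
rewrite (eq_bigr (fun sg : 'S_m.+1 => G (sg ord_max))); last first.
  by move=> sg _; rewrite !ffunE sym_del // mulrC.
have Hm : (m.+1%:R : R) != 0 by rewrite pnatr_eq0.
have Hf : (m.+1`!%:R : R) != 0 by rewrite pnatr_eq0 -lt0n fact_gt0.
apply: (mulfI Hf); rewrite mulrA divff // mul1r.
apply: (mulfI Hm); rewrite sum_perm_all [in RHS]mulrCA mulVKf //.
Qed.


Lemma Mop_lin m a (X Y : tensor R n m) : Mop (a *: X + Y) = a *: Mop X + Mop Y.
Proof.
apply/ffunP => j; rewrite !ffunE scaleRE mulr_sumr -big_split /=.
by apply: eq_bigr => k _; rewrite !ffunE scaleRE; ring.
Qed.

Lemma DM_inj1 q (x : tensor R n q.+1) : Dop (Mop x) = 0 -> x = 0.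
Proof.
move=> H; apply: (@DM_inj q x 0); rewrite mulr1n -DMS; exact: H.
Qed.

Lemma Lf_lin m a (X Y : tensor R n m) :
  Psym (outer_vec (a *: X + Y) v) = a *: Psym (outer_vec X v) + Psym (outer_vec Y v).
Proof.
apply/ffunP => j; rewrite !ffunE !scaleRE !sum_ffunE mulrCA -mulrDr; congr (_ * _).
rewrite mulr_sumr -big_split /=; apply: eq_bigr => sg _.
by rewrite !ffunE scaleRE; ring.
Qed.

Lemma tperm_lin m (sg : 'S_m) a (X Y : tensor R n m) :
  Defs.tperm sg (a *: X + Y) - (a *: X + Y) =
  a *: (Defs.tperm sg X - X) + (Defs.tperm sg Y - Y).
Proof. by apply/ffunP => j; rewrite !ffunE !scaleRE; ring. Qed.

Lemma mem_sym m (A : tensor R n m) : (A \in symspace R n m) <-> sym_tensor A.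
Proof.
rewrite memvE; split.
  move/subv_bigcapP => H sg; have := H sg isT; rewrite -memvE memv_ker.
  by rewrite lfunE_lin ?subr_eq0 => [/eqP|]; last exact: tperm_lin.
move=> H; apply/subv_bigcapP => sg _; rewrite -memvE memv_ker lfunE_lin.
  by rewrite H subrr.
exact: tperm_lin.
Qed.

Lemma main_q q :
  let phi := fun A : tensor R n q.+1 => contract (Psym (outer_vec A v)) s in
  [/\ (forall A : tensor R n q.+1, sym_tensor A -> sym_tensor (phi A)),
      (forall A B : tensor R n q.+1, sym_tensor A -> sym_tensor B -> phi A = phi B -> A = B),
      (forall B : tensor R n q.+1, sym_tensor B -> exists2 A, sym_tensor A & phi A = B)
    & \dim (linfun (fun A : tensor R n q.+1 => Psym (outer_vec A v)) @: symspace R n q.+1)%VS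
      = \dim (symspace R n q.+1)].
Proof.
move=> phi.
have phi_lin a (X Y : tensor R n q.+1) : phi (a *: X + Y) = a *: phi X + phi Y.
  by rewrite /phi Lf_lin; apply: Dop_lin.
have phiE (A : tensor R n q.+1) : sym_tensor A -> phi A = (q.+2%:R)^-1 *: Dop (Mop A).
  move=> HA; rewrite /phi Psym_outer // -[_ *: Mop A]addr0.
  by rewrite -[contract _ s]/(Dop _) Dop_lin -[Dop 0]/(contract 0 s) [contract 0 s](_ : _ = 0) ?addr0 //;
     apply/ffunP => i; rewrite !ffunE big1 // => k _; rewrite ffunE mulr0.
have Hq : (q.+2%:R : R)^-1 != 0 by rewrite invr_eq0 pnatr_eq0.
have phi0 (A : tensor R n q.+1) : sym_tensor A -> phi A = 0 -> A = 0.
  move=> HA; rewrite phiE // => /eqP; rewrite scaler_eq0 (negbTE Hq) /= => /eqP.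
  exact: DM_inj1.
have phisym (A : tensor R n q.+1) : sym_tensor (phi A).
  by apply: contract_sym; apply: Psym_sym.
have inj (A B : tensor R n q.+1) : sym_tensor A -> sym_tensor B -> phi A = phi B -> A = B.
  move=> HA HB E; apply/eqP; rewrite -subr_eq0; apply/eqP; apply: phi0.
    by apply/mem_sym; rewrite rpredB //; apply/mem_sym.
  have := phi_lin (-1) B A; rewrite !scaleN1r [- B + A]addrC => ->.
  by rewrite E addNr.
have kerT : (symspace R n q.+1 :&: lker (linfun phi) = 0)%VS.
  apply/eqP; rewrite -subv0; apply/subvP => x; rewrite memv_cap memv_ker memv0.
  move=> /andP [/mem_sym Hx]; rewrite lfunE_lin // => /eqP Hp.
  by apply/eqP; apply: phi0.
split => //.
- move=> B HB.
  have Hdim := limg_dim_eq kerT.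
  have Hsub : (linfun phi @: symspace R n q.+1 <= symspace R n q.+1)%VS.
    apply/subvP => y /memv_imgP [x _ ->]; rewrite lfunE_lin //.
    by apply/mem_sym.
  have /eqP Heq : (linfun phi @: symspace R n q.+1)%VS == symspace R n q.+1.
    by rewrite eqEdim Hsub Hdim leqnn.
  have : B \in (linfun phi @: symspace R n q.+1)%VS by rewrite Heq; apply/mem_sym.
  case/memv_imgP => A /mem_sym HA ->; exists A => //.
  by rewrite lfunE_lin.
- apply: limg_dim_eq.
  apply/eqP; rewrite -subv0; apply/subvP => x; rewrite memv_cap memv_ker memv0.
  move=> /andP [/mem_sym Hx]; rewrite lfunE_lin; last exact: Lf_lin.
  move=> /eqP Hp; apply/eqP; apply: phi0 => //.
  by rewrite /phi Hp; apply/ffunP => i; rewrite !ffunE big1 // => k _; rewrite ffunE mulr0.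
Qed.

End Aux.

Theorem mainTheorem3 (R : realType) (n p : nat) (v s : 'I_n -> R) :
  (2 <= p)%N -> dotv v s != 0 ->
  let phi := fun A : tensor R n p.-1 => contract (Psym (outer_vec A v)) s in
  [/\ (forall A : tensor R n p.-1, sym_tensor A -> sym_tensor (phi A)),
      (forall A B : tensor R n p.-1, sym_tensor A -> sym_tensor B -> phi A = phi B -> A = B),
      (forall B : tensor R n p.-1, sym_tensor B -> exists2 A, sym_tensor A & phi A = B)
    & \dim (linfun (fun A : tensor R n p.-1 => Psym (outer_vec A v)) @: symspace R n p.-1)%VS
      = \dim (symspace R n p.-1)].
Proof.
case: p => [|[|q]] // _ Hc.
exact: (main_q Hc q).
Qed.
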